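(* Suppose $U=1$, so $\mathbf{X}_{\mathrm{u}}=\mathbf{x}^\top$ for a single $\mathbf{x}\in\mathbb{R}^d$. Assume $\phi$ is convex, $R_\phi$ is differentiable at its minimizer $\mathbf{w}_{\mathrm{sup}}$, $R^{\mathrm{semi}}_\phi(\cdot,q)$ is strictly convex for every $q\in[0,1]$, and the derivatives $\phi'(\mathbf{x}^\top\mathbf{w}_{\mathrm{sup}})$ and $\phi'(-\mathbf{x}^\top\mathbf{w}_{\mathrm{sup}})$ exist. If there is no $q\in[0,1]$ such that $$\big(\phi'(\mathbf{x}^\top\mathbf{w}_{\mathrm{sup}})+\phi'(-\mathbf{x}^\top\mathbf{w}_{\mathrm{sup}})\big)\,q\,\mathbf{x}=\phi'(-\mathbf{x}^\top\mathbf{w}_{\mathrm{sup}})\,\mathbf{x},$$ then $\mathbf{w}_{\mathrm{sup}}\notin\mathcal{C}_\phi$, and every minimizer $\mathbf{w}_{\mathrm{semi}}$ of $\mathbf{w}\mapsto\max_{q\in[0,1]}D_\phi(\mathbf{w},q)$ satisfies $\mathbf{w}_{\mathrm{semi}}\neq\mathbf{w}_{\mathrm{sup}}$ and $D_\phi(\mathbf{w}_{\mathrm{semi}},q)<0$ for all $q\in[0,1]$.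
   Context: Fix integers $L,d\ge 1$. Let $\mathbf{X}\in\mathbb{R}^{L\times d}$ be a matrix whose rows $\mathbf{x}_1^\top,\dots,\mathbf{x}_L^\top$ are the labeled objects, with labels $\mathbf{y}\in\{-1,+1\}^L$. Let $\phi:\mathbb{R}\to\mathbb{R}$ be a loss function, $\Omega:\mathbb{R}^d\to\mathbb{R}$ a convex function and $\lambda\ge 0$. The supervised risk is $R_\phi(\mathbf{w})=\sum_{i=1}^L\phi(y_i\mathbf{x}_i^\top\mathbf{w})+\lambda\Omega(\mathbf{w})$. With one unlabeled object $\mathbf{x}$ and responsibility $q\in[0,1]$, the semi-supervised risk is $R^{\mathrm{semi}}_\phi(\mathbf{w},q)=R_\phi(\mathbf{w})+q\phi(\mathbf{x}^\top\mathbf{w})+(1-q)\phi(-\mathbf{x}^\top\mathbf{w})$. Define $D_\phi(\mathbf{w},q)=R^{\mathrm{semi}}_\phi(\mathbf{w},q)-R^{\mathrm{semi}}_\phi(\mathbf{w}_{\mathrm{sup}},q)$, where $\mathbf{w}_{\mathrm{sup}}$ minimizes $R_\phi$. The constraint set is $\mathcal{C}_\phi=\{\mathbf{w}\in\mathbb{R}^d:\ \exists\,q\in[0,1] \text{ such that } \mathbf{w} \text{ minimizes } R^{\mathrm{semi}}_\phi(\cdot,q)\}$. *)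

(* Defs.v *)
From mathcomp Require Import ssreflect ssrfun ssrbool eqtype ssrnat seq choice fintype bigop.
From Stdlib Require Import Reals.
Open Scope R_scope.

Definition vec (d : nat) := 'I_d -> R.

Definition dot {d : nat} (u v : vec d) : R := \big[Rplus/R0]_(i < d) (u i * v i).
Definition vnorm {d : nat} (u : vec d) : R := sqrt (dot u u).
Definition vadd {d : nat} (u v : vec d) : vec d := fun i => u i + v i.
Definition vscale {d : nat} (t : R) (u : vec d) : vec d := fun i => t * u i.

Definition convex_fun (f : R -> R) : Prop :=
  forall a b t, 0 <= t <= 1 -> f (t * a + (1 - t) * b) <= t * f a + (1 - t) * f b.

Definition convex_vec {d : nat} (f : vec d -> R) : Prop :=
  forall u v t, 0 <= t <= 1 ->
    f (vadd (vscale t u) (vscale (1 - t) v)) <= t * f u + (1 - t) * f v.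

Definition strictly_convex_vec {d : nat} (f : vec d -> R) : Prop :=
  forall u v t, u <> v -> 0 < t < 1 ->
    f (vadd (vscale t u) (vscale (1 - t) v)) < t * f u + (1 - t) * f v.

Definition differentiable_at {d : nat} (f : vec d -> R) (w : vec d) : Prop :=
  exists g : vec d, forall eps, 0 < eps -> exists delta, 0 < delta /\
    forall h : vec d, vnorm h < delta ->
      Rabs (f (vadd w h) - f w - dot g h) <= eps * vnorm h.

Definition Rsup {L d : nat} (phi : R -> R) (Omega : vec d -> R) (lambda : R)
  (X : 'I_L -> vec d) (y : 'I_L -> R) (w : vec d) : R :=
  \big[Rplus/R0]_(i < L) phi (y i * dot (X i) w) + lambda * Omega w.

(* Semi-supervised risk with one unlabeled object x and responsibility q. *)
Definition Rsemi {L d : nat} (phi : R -> R) (Omega : vec d -> R) (lambda : R)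
  (X : 'I_L -> vec d) (y : 'I_L -> R) (x : vec d) (w : vec d) (q : R) : R :=
  Rsup phi Omega lambda X y w + q * phi (dot x w) + (1 - q) * phi (- dot x w).

Definition is_minimizer {d : nat} (f : vec d -> R) (w : vec d) : Prop :=
  forall w', f w <= f w'.

Definition Dphi {L d : nat} (phi : R -> R) (Omega : vec d -> R) (lambda : R)
  (X : 'I_L -> vec d) (y : 'I_L -> R) (x : vec d) (wsup w : vec d) (q : R) : R :=
  Rsemi phi Omega lambda X y x w q - Rsemi phi Omega lambda X y x wsup q.

Definition in_C {L d : nat} (phi : R -> R) (Omega : vec d -> R) (lambda : R)
  (X : 'I_L -> vec d) (y : 'I_L -> R) (x : vec d) (w : vec d) : Prop :=
  exists q, 0 <= q <= 1 /\
    is_minimizer (fun v => Rsemi phi Omega lambda X y x v q) w.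

Definition is_max_on_01 (F : R -> R) (m : R) : Prop :=
  (exists q, 0 <= q <= 1 /\ F q = m) /\ (forall q, 0 <= q <= 1 -> F q <= m).

Definition minimizes_max {d : nat} (G : vec d -> R -> R) (w : vec d) : Prop :=
  exists m, is_max_on_01 (G w) m /\
    forall w' m', is_max_on_01 (G w') m' -> m <= m'.

(* Main.v *)
From HB Require Import structures.
Require Import Defs.
From mathcomp Require Import ssreflect ssrfun ssrbool eqtype ssrnat seq choice fintype bigop.
From Stdlib Require Import Reals Lra FunctionalExtensionality Classical.
Open Scope R_scope.

HB.instance Definition _ := Monoid.isComLaw.Build R 0%R Rplus (fun a b c => esym (Rplus_assoc a b c)) Rplus_comm Rplus_0_l.

Lemma dot_vadd_r d (u v w : vec d) : dot u (vadd v w) = dot u v + dot u w.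
Proof. rewrite /dot /vadd -big_split /=; apply: eq_bigr => i _; ring. Qed.

Lemma dot_vscale_r d (u v : vec d) t : dot u (vscale t v) = t * dot u v.
Proof.
rewrite /dot /vscale; elim/big_rec2: _ => [|i y1 y2 _ ->]; ring.
Qed.

Lemma dot_vscale_l d (u v : vec d) t : dot (vscale t u) v = t * dot u v.
Proof.
rewrite /dot /vscale; elim/big_rec2: _ => [|i y1 y2 _ ->]; ring.
Qed.

Lemma R0E : R0 = 0. Proof. reflexivity. Qed.

Lemma dot_pos d (x : vec d) i : x i <> 0 -> 0 < dot x x.
Proof.
move=> Hi; rewrite /dot (bigD1 i) //=.
set S := bigop.body _ _ _.
have : R0 <= S.
  rewrite /S; elim/big_rec: _ => [|j y _ Hy]; first by right.
  have := Rle_0_sqr (x j); rewrite /Rsqr R0E in Hy *; lra.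
have := Rsqr_pos_lt _ Hi; rewrite /Rsqr R0E; lra.
Qed.

Lemma vnorm_scale d (x : vec d) h : vnorm (vscale h x) = Rabs h * sqrt (dot x x).
Proof.
rewrite /vnorm dot_vscale_l dot_vscale_r -Rmult_assoc sqrt_mult.
- by rewrite sqrt_Rsqr_abs.
- apply Rle_0_sqr.
- rewrite /dot; elim/big_rec: _ => [|j y _ Hy]; first by right.
  have := Rle_0_sqr (x j); move: Hy; rewrite /Rsqr ?R0E; lra.
Qed.

Lemma wt0 d (w x : vec d) : vadd w (vscale 0 x) = w.
Proof. apply functional_extensionality => i; rewrite /vadd /vscale; ring. Qed.

Lemma frechet_line d (f : vec d -> R) w x : 0 < dot x x -> differentiable_at f w ->
  exists l, derivable_pt_lim (fun t => f (vadd w (vscale t x))) 0 l.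
Proof.
move=> Hs [g Hg]; exists (dot g x) => eps Heps.
have Hq : 0 < sqrt (dot x x) by apply sqrt_lt_R0.
have Heps' : 0 < eps / (2 * sqrt (dot x x)).
  apply Rdiv_lt_0_compat; lra.
have [delta0 [Hd0 Hdel]] := Hg _ Heps'.
have Hd : 0 < delta0 / sqrt (dot x x) by apply Rdiv_lt_0_compat.
exists (mkposreal _ Hd) => h Hh0 Hh /=.
have Hah : 0 < Rabs h by apply Rabs_pos_lt.
have Hn : vnorm (vscale h x) < delta0.
  rewrite vnorm_scale.
  have := Rmult_lt_compat_r (sqrt (dot x x)) _ _ Hq Hh.
  rewrite /= /Rdiv Rmult_assoc Rinv_l; lra.
have := Hdel _ Hn; rewrite vnorm_scale dot_vscale_r Rplus_0_l wt0.
set A := f (vadd w (vscale h x)).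
move=> HE.
have -> : (A - f w) / h - dot g x = (A - f w - h * dot g x) / h by field.
rewrite /Rdiv Rabs_mult Rabs_inv -/(Rdiv _ _).
apply Rle_lt_trans with (eps / 2); last lra.
have -> : eps / 2 = (eps / (2 * sqrt (dot x x)) * (Rabs h * sqrt (dot x x))) / Rabs h.
  field; lra.
apply Rmult_le_compat_r; last exact HE.
left; apply Rinv_0_lt_compat; lra.
Qed.

Lemma descent_pos f l : derivable_pt_lim f 0 l -> 0 < l ->
  exists del, 0 < del /\ forall t, -del < t < 0 -> f t < f 0.
Proof.
move=> H Hl; have [del Hdel] := H l Hl.
exists del; split; first by apply cond_pos.
move=> t Ht.
have := Hdel t ltac:(lra) ltac:(rewrite Rabs_left; lra).
rewrite Rplus_0_l => Ha.
have Hq : 0 < (f t - f 0) / t.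
  have := Rle_abs (l - (f t - f 0) / t); rewrite -Rabs_Ropp Ropp_minus_distr in Ha; lra.
have : (f t - f 0) = (f t - f 0) / t * t by field; lra.
have := Rmult_lt_compat_l _ t 0 Hq ltac:(lra). nra.
Qed.

Lemma descent_neg f l : derivable_pt_lim f 0 l -> l < 0 ->
  exists del, 0 < del /\ forall t, 0 < t < del -> f t < f 0.
Proof.
move=> H Hl; have [del Hdel] := H (-l) ltac:(lra).
exists del; split; first by apply cond_pos.
move=> t Ht.
have := Hdel t ltac:(lra) ltac:(rewrite Rabs_right; lra).
rewrite Rplus_0_l => Ha.
have Hq : (f t - f 0) / t < 0.
  have := Rle_abs ((f t - f 0) / t - l); lra.
have : (f t - f 0) = (f t - f 0) / t * t by field; lra.
nra.
Qed.

Lemma min_deriv0 f l : derivable_pt_lim f 0 l -> (forall t, f 0 <= f t) -> l = 0.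
Proof.
move=> H Hm.
case: (Rtotal_order l 0) => [Hl|[//|Hl]].
- have [del [Hd Hx]] := descent_neg _ _ H Hl.
  have := Hx (del/2) ltac:(lra); have := Hm (del/2); lra.
- have [del [Hd Hx]] := descent_pos _ _ H Hl.
  have := Hx (-(del/2)) ltac:(lra); have := Hm (-(del/2)); lra.
Qed.

Lemma lin_deriv c s : derivable_pt_lim (fun t => c + t * s) 0 s.
Proof.
move=> eps Heps; exists (mkposreal 1 Rlt_0_1) => h Hh _.
have -> : (c + (0 + h) * s - (c + 0 * s)) / h - s = 0 by field.
by rewrite Rabs_R0.
Qed.

Lemma comp_deriv (phi : R -> R) c s a : derivable_pt_lim phi c a ->
  derivable_pt_lim (fun t => phi (c + t * s)) 0 (a * s).
Proof.
move=> Ha.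
have H := derivable_pt_lim_comp (fun t => c + t * s) phi 0 s a (lin_deriv c s).
rewrite /= Rmult_0_l Rplus_0_r in H.
exact: (H Ha).
Qed.

Theorem lemma3 (L d : nat) (HL : (1 <= L)%nat) (Hd : (1 <= d)%nat)
  (X : 'I_L -> vec d) (y : 'I_L -> R) (Hy : forall i, y i = 1 \/ y i = -1)
  (phi : R -> R) (Omega : vec d -> R) (lambda : R)
  (HOmega : convex_vec Omega) (Hlambda : 0 <= lambda)
  (x : vec d) (wsup : vec d)
  (Hwsup : is_minimizer (Rsup phi Omega lambda X y) wsup)
  (Hphi : convex_fun phi)
  (Hdiff : differentiable_at (Rsup phi Omega lambda X y) wsup)
  (Hstrict : forall q, 0 <= q <= 1 ->
     strictly_convex_vec (fun w => Rsemi phi Omega lambda X y x w q))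
  (a b : R)
  (Ha : derivable_pt_lim phi (dot x wsup) a)
  (Hb : derivable_pt_lim phi (- dot x wsup) b)
  (Hnoq : ~ exists q, 0 <= q <= 1 /\
     forall i, (a + b) * q * x i = b * x i) :
  ~ in_C phi Omega lambda X y x wsup /\
  forall wsemi,
    minimizes_max (Dphi phi Omega lambda X y x wsup) wsemi ->
    wsemi <> wsup /\
    forall q, 0 <= q <= 1 -> Dphi phi Omega lambda X y x wsup wsemi q < 0.
Proof.
have [i Hi] : exists i, x i <> 0.
  apply: NNPP => H; apply: Hnoq; exists 0; split; first lra.
  move=> i; have -> : x i = 0 by apply: NNPP => H'; apply: H; exists i.
  ring.
have Hs := dot_pos _ x i Hi.
set s := dot x x in Hs.
set dx := dot x wsup in Ha Hb.
have Hc : forall q, 0 <= q <= 1 -> q * a - (1 - q) * b <> 0.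
  move=> q Hq Hz; apply: Hnoq; exists q; split => // j.
  have : (q * a - (1 - q) * b) * x j = 0 by rewrite Hz; ring.
  move=> H; lra.
have Hab : (0 < a /\ b < 0) \/ (a < 0 /\ 0 < b).
  have Ha0 := Hc 1 ltac:(lra). have Hb0 := Hc 0 ltac:(lra).
  case: (Rtotal_order a 0) => [Hal|[Hae|Hag]]; last first.
  - case: (Rtotal_order b 0) => [Hbl|[Hbe|Hbg]]; [by left| lra |].
    exfalso; apply: (Hc (b / (a + b))).
      split; [left; apply Rdiv_lt_0_compat; lra|].
      apply Rmult_le_reg_r with (a + b); first lra.
      rewrite /Rdiv Rmult_assoc Rinv_l; lra.
    field; lra.
  - lra.
  - case: (Rtotal_order b 0) => [Hbl|[Hbe|Hbg]]; [|lra| by right].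
    exfalso; apply: (Hc (b / (a + b))).
      split.
        have -> : b / (a + b) = (- b) / (- (a + b)) by field; lra.
        left; apply Rdiv_lt_0_compat; lra.
      apply Rmult_le_reg_r with (- (a + b)); first lra.
      have -> : b / (a + b) * - (a + b) = - b by field; lra.
      lra.
    field; lra.
pose r t := Rsup phi Omega lambda X y (vadd wsup (vscale t x)).
have [l Hl] := frechet_line _ _ _ _ Hs Hdiff.
have Hl0 : l = 0.
  apply: (min_deriv0 r) => // t; rewrite /r wt0; exact: Hwsup.
rewrite Hl0 in Hl.
pose F q t := Rsemi phi Omega lambda X y x (vadd wsup (vscale t x)) q.
have HF0 : forall q, F q 0 = Rsemi phi Omega lambda X y x wsup q.
  by move=> q; rewrite /F wt0.
have HFd : forall q, derivable_pt_lim (F q) 0 ((q * a - (1 - q) * b) * s).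
  move=> q.
  have -> : F q = fun t => (r t + q * phi (dx + t * s)) + (1 - q) * phi (- dx + t * (- s)).
    apply functional_extensionality => t.
    rewrite /F /Rsemi /r dot_vadd_r dot_vscale_r -/dx -/s.
    have -> : - (dx + t * s) = - dx + t * - s by ring.
    by [].
  have H1 := comp_deriv phi dx s a Ha.
  have H2 := comp_deriv phi (- dx) (- s) b Hb.
  have H3 := derivable_pt_lim_scal _ q _ _ H1.
  have H4 := derivable_pt_lim_scal _ (1 - q) _ _ H2.
  have H5 := derivable_pt_lim_plus _ _ _ _ _ Hl H3.
  have H6 := derivable_pt_lim_plus _ _ _ _ _ H5 H4.
  have -> : (q * a - (1 - q) * b) * s = 0 + q * (a * s) + (1 - q) * (b * - s) by ring.
  exact: H6.
split.
  move=> [q [Hq Hmin]].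
  have := min_deriv0 (F q) _ (HFd q).
  move/(_ ltac:(move=> t; rewrite HF0; exact: Hmin)) => H0.
  have := Hc q Hq; have := Rmult_integral _ _ H0; lra.
have [t [Ht0 Ht1]] : exists t, F 0 t < F 0 0 /\ F 1 t < F 1 0.
  have Hd0 := HFd 0. have Hd1 := HFd 1.
  case: Hab => [[Hap Hbn]|[Han Hbp]].
  - have [d0 [Hd0p Hx0]] := descent_pos _ _ Hd0 ltac:(nra).
    have [d1 [Hd1p Hx1]] := descent_pos _ _ Hd1 ltac:(nra).
    exists (- (Rmin d0 d1) / 2).
    have := Rmin_l d0 d1; have := Rmin_r d0 d1; have := Rmin_glb_lt _ _ 0 Hd0p Hd1p.
    move=> *; split; [apply Hx0| apply Hx1]; lra.
  - have [d0 [Hd0p Hx0]] := descent_neg _ _ Hd0 ltac:(nra).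
    have [d1 [Hd1p Hx1]] := descent_neg _ _ Hd1 ltac:(nra).
    exists ((Rmin d0 d1) / 2).
    have := Rmin_l d0 d1; have := Rmin_r d0 d1; have := Rmin_glb_lt _ _ 0 Hd0p Hd1p.
    move=> *; split; [apply Hx0| apply Hx1]; lra.
set w' := vadd wsup (vscale t x).
set G := Dphi phi Omega lambda X y x wsup.
have HG : forall w q, G w q = q * G w 1 + (1 - q) * G w 0.
  move=> w q; rewrite /G /Dphi /Rsemi; ring.
have HG0 : G w' 0 < 0 by move: Ht0; rewrite /G /Dphi /F -/w' wt0; lra.
have HG1 : G w' 1 < 0 by move: Ht1; rewrite /G /Dphi /F -/w' wt0; lra.
have Hmax : is_max_on_01 (G w') (Rmax (G w' 0) (G w' 1)).
  split.
    case: (Rle_dec (G w' 0) (G w' 1)) => H.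
    - exists 1; split; first lra; by rewrite Rmax_right.
    - exists 0; split; first lra; rewrite Rmax_left; lra.
  move=> q Hq; rewrite HG.
  have := Rmax_l (G w' 0) (G w' 1); have := Rmax_r (G w' 0) (G w' 1); nra.
have Hm' : Rmax (G w' 0) (G w' 1) < 0 by apply Rmax_lub_lt.
move=> wsemi [m [[_ Hmq] Hmin]].
have Hmneg := Rle_lt_trans _ _ _ (Hmin _ _ Hmax) Hm'.
split.
  move=> E; have := Hmq 0 ltac:(lra); rewrite E /G /Dphi; lra.
move=> q Hq; have := Hmq q Hq; rewrite -/G; lra.
Qed.
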